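(* Let $v_1,v_2$ be two (smooth) solutions of $( * )$ on $X$ such that, for some $C>0$ and $\epsilon\in(0,1)$, $0\le v_2-v_1\le C(y^{\epsilon}+y^{1-\epsilon})$ on all of $X$. Then $v_1=v_2$.
   Context: $X=\mathbb{R}^2\times(0,+\infty)$ with coordinates $(x_1,x_2,y)$, $z=x_1+ix_2$, $\Delta=\partial_1^2+\partial_2^2+\partial_y^2$; $P(z)$ is a non-zero complex polynomial; $( * )$ is the equation $\Delta u+e^{-2u}|P(z)|^2=0$ on $X$. *)

(* Defs.v *)
From Coquelicot Require Import Coquelicot.
From Stdlib Require Import Reals List.
Open Scope R_scope.

(* Points of R^2 x R are triples ((x1, x2), y). *)
Definition pt := (R * R * R)%type.
Definition inX (p : pt) : Prop := 0 < snd p.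

(* Partial derivative in direction i (0: x1, 1: x2, otherwise: y). *)
Definition partial (i : nat) (f : pt -> R) (p : pt) : R :=
  match i with
  | O => Derive (fun t => f (t, snd (fst p), snd p)) (fst (fst p))
  | S O => Derive (fun t => f (fst (fst p), t, snd p)) (snd (fst p))
  | _ => Derive (fun t => f (fst (fst p), snd (fst p), t)) (snd p)
  end.

Definition partial_exists (i : nat) (f : pt -> R) (p : pt) : Prop :=
  match i with
  | O => ex_derive (fun t => f (t, snd (fst p), snd p)) (fst (fst p))
  | S O => ex_derive (fun t => f (fst (fst p), t, snd p)) (snd (fst p))
  | _ => ex_derive (fun t => f (fst (fst p), snd (fst p), t)) (snd p)
  end.

Fixpoint iter_partial (l : list nat) (f : pt -> R) : pt -> R :=
  match l with
  | nil => f
  | i :: l' => partial i (iter_partial l' f)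
  end.

Definition smooth_on_X (f : pt -> R) : Prop :=
  forall (l : list nat) (p : pt), inX p ->
    continuous (iter_partial l f) p /\
    forall i : nat, (i <= 2)%nat -> partial_exists i (iter_partial l f) p.

Definition laplacian (f : pt -> R) (p : pt) : R :=
  partial 0 (partial 0 f) p + partial 1 (partial 1 f) p
  + partial 2 (partial 2 f) p.

(* Complex polynomial given by its list of coefficients [a0; a1; ...],
   evaluated by Horner's rule: a0 + z (a1 + z (a2 + ...)). *)
Definition peval (P : list Complex.C) (z : Complex.C) : Complex.C :=
  fold_right (fun a acc : Complex.C => Cplus a (Cmult z acc)) (RtoC 0) P.

Definition nonzero_poly (P : list Complex.C) : Prop := exists a, In a P /\ a <> RtoC 0.

(* The equation ( * ): Δu + e^{-2u} |P(z)|^2 = 0 on X, z = x1 + i x2. *)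
Definition solves_star (P : list Complex.C) (u : pt -> R) : Prop :=
  smooth_on_X u /\
  forall p : pt, inX p ->
    laplacian u p
    + exp (-2 * u p) * (Cmod (peval P (fst (fst p), snd (fst p))))^2 = 0.

(* Main.v *)
Require Import Defs.
From Coquelicot Require Import Coquelicot.
From Stdlib Require Import Reals List.
From Stdlib Require Import Lra Lia.
Open Scope R_scope.

Module EVTm.
From HB Require Import structures.
From mathcomp Require Import all_boot all_order all_algebra.
From mathcomp Require Import all_classical all_reals all_analysis.
From mathcomp Require Import Rstruct Rstruct_topology.
Import Order.TTheory GRing.Theory Num.Theory.
Local Open Scope classical_set_scope.

Definition inbox (a1 b1 a2 b2 a3 b3 : R) (p : R * R * R) : Prop :=
  Rle a1 (fst (fst p)) /\ Rle (fst (fst p)) b1 /\ Rle a2 (snd (fst p)) /\ Rle (snd (fst p)) b2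
  /\ Rle a3 (snd p) /\ Rle (snd p) b3.

Lemma EVT3 (f : R * R * R -> R) (a1 b1 a2 b2 a3 b3 : R) :
  Rle a1 b1 -> Rle a2 b2 -> Rle a3 b3 ->
  (forall p, inbox a1 b1 a2 b2 a3 b3 p -> forall eps : R, Rlt 0 eps ->
     exists d : R, Rlt 0 d /\ forall q,
       Rlt (Rabs (Rminus (fst (fst q)) (fst (fst p)))) d ->
       Rlt (Rabs (Rminus (snd (fst q)) (snd (fst p)))) d ->
       Rlt (Rabs (Rminus (snd q) (snd p))) d -> Rlt (Rabs (Rminus (f q) (f p))) eps) ->
  exists c, inbox a1 b1 a2 b2 a3 b3 c /\
    forall t, inbox a1 b1 a2 b2 a3 b3 t -> Rle (f t) (f c).
Proof.
move=> h1 h2 h3 hc.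
set A := (`[a1, b1]%classic `*` `[a2, b2]%classic) `*` `[a3, b3]%classic : set (R * R * R).
have eA : forall p, A p <-> inbox a1 b1 a2 b2 a3 b3 p.
  move=> [[x y] z]; rewrite /A /inbox /= !in_itv /=.
  split.
  - by move=> [[/andP[/RleP ? /RleP ?] /andP[/RleP ? /RleP ?]] /andP[/RleP ? /RleP ?]].
  - by move=> [/RleP -> [/RleP -> [/RleP -> [/RleP -> [/RleP -> /RleP ->]]]]].
have A0 : A !=set0.
  exists (a1, a2, a3); apply/eA; rewrite /inbox /=; lra.
have cA : compact A.
  by apply: compact_setX; [apply: compact_setX|]; exact: segment_compact.
have cf : {within A, continuous f}.
  apply: continuous_in_subspaceT => p /set_mem /eA Ap.
  apply/cvg_ballP => e /RltP e0.
  have [d [/RltP d0 hd]] := hc p Ap e e0.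
  exists (ball p.1 d, ball p.2 d); first by split; apply: nbhsx_ballx.
  move=> q [[/= bq1 bq2] bq3].
  rewrite /ball /= in bq1 bq2 bq3 *.
  rewrite -!RabsE in bq1 bq2 bq3 *.
  apply/RltP; rewrite Rabs_minus_sym; apply: hd; rewrite Rabs_minus_sym; exact/RltP.
have [c cA' mx] := compact_EVT_max A0 cA cf.
exists c; split; first by apply/eA; exact: set_mem.
by move=> t /eA /mem_set /mx /RleP.
Qed.
End EVTm.

Open Scope R_scope.
Lemma ed_pt (f : R*R*R -> R) (p : R*R*R) : continuous f p ->
  forall eps, 0 < eps -> exists d, 0 < d /\ forall q,
   Rabs (fst (fst q) - fst (fst p)) < d -> Rabs (snd (fst q) - snd (fst p)) < d ->
   Rabs (snd q - snd p) < d -> Rabs (f q - f p) < eps.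
Proof.
intros hc eps he.
destruct (proj1 (filterlim_locally f (f p)) hc (mkposreal eps he)) as [d hd].
exists d; split; [apply cond_pos|].
intros q h1 h2 h3. specialize (hd q). simpl in hd.
unfold ball in hd; simpl in hd; unfold prod_ball, AbsRing_ball in hd; simpl in hd.
unfold abs, minus, plus, opp in hd; simpl in hd.
apply hd; repeat split; assumption.
Qed.

Lemma ed_R (f : R -> R) (x : R) : ex_derive f x ->
  forall eps, 0 < eps -> exists d, 0 < d /\ forall t,
   Rabs (t - x) < d -> Rabs (f t - f x) < eps.
Proof.
intros hd eps he.
assert (hc := ex_derive_continuous f x hd).
destruct (proj1 (filterlim_locally f (f x)) hc (mkposreal eps he)) as [d hd'].
exists d; split; [apply cond_pos|].
intros t h1. specialize (hd' t).
unfold ball in hd'; simpl in hd'; unfold AbsRing_ball in hd'; simpl in hd'.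
unfold abs, minus, plus, opp in hd'; simpl in hd'.
apply hd'; assumption.
Qed.
Lemma key1D (f1 f2 : R -> R) (a b c t0 r : R) :
  0 < r ->
  (forall t, Rabs (t - t0) < r -> ex_derive f1 t /\ ex_derive f2 t) ->
  ex_derive (Derive f1) t0 -> ex_derive (Derive f2) t0 ->
  (forall t, Rabs (t - t0) < r ->
     f2 t - f1 t - (a * t ^ 2 + b * t + c) <= f2 t0 - f1 t0 - (a * t0 ^ 2 + b * t0 + c)) ->
  Derive (Derive f2) t0 - Derive (Derive f1) t0 <= 2 * a.
Proof.
intros hr hd hd1 hd2 hmax.
set (g := fun t => f2 t - f1 t - (a * t ^ 2 + b * t + c)).
set (g' := fun t => Derive f2 t - Derive f1 t - (2 * a * t + b)).
set (L := Derive (Derive f2) t0 - Derive (Derive f1) t0 - 2 * a).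
assert (hg : forall t, Rabs (t - t0) < r -> derivable_pt_lim g t (g' t)).
{ intros t ht. apply is_derive_Reals. destruct (hd t ht) as [e1 e2].
  unfold g, g'. auto_derive; [tauto|]. change (fun x : R => f2 x) with f2; change (fun x : R => f1 x) with f1; ring. }
assert (hg' : derivable_pt_lim g' t0 L).
{ apply is_derive_Reals. unfold g', L. auto_derive; [tauto|]. change (fun x : R => Derive f2 x) with (Derive f2); change (fun x : R => Derive f1 x) with (Derive f1); ring. }
destruct (Rle_or_lt L 0) as [HL|HL]; [unfold L in HL; lra|exfalso].
destruct (hg' (L/2)) as [del hdel]; [lra|].
set (m := Rmin del r / 2).
assert (hm : 0 < m) by (unfold m; apply Rmin_case; destruct del; simpl; lra).
assert (hmd : m < del) by (unfold m; pose proof (Rmin_l del r); destruct del; simpl in *; lra).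
assert (hmr : m < r) by (unfold m; pose proof (Rmin_r del r); lra).
assert (quot : forall h, h <> 0 -> Rabs h < del -> (g' (t0 + h) - g' t0) / h > L / 2).
{ intros h h0 hh. specialize (hdel h h0 hh). apply Rabs_def2 in hdel. lra. }
destruct (Rle_or_lt 0 (g' t0)) as [Hp|Hn].
- destruct (MVT_cor2 g g' t0 (t0 + m)) as [cc [eq [c1 c2]]]; [lra| |].
  { intros x hx. apply hg. rewrite Rabs_pos_eq; lra. }
  assert (hq := quot (cc - t0)).
  replace (t0 + (cc - t0)) with cc in hq by ring.
  assert (hq' : (g' cc - g' t0) / (cc - t0) > L / 2).
  { apply hq; [lra|]. rewrite Rabs_pos_eq; lra. }
  assert (hpos : g' cc - g' t0 > 0).
  { set (k := (g' cc - g' t0) / (cc - t0)) in hq'.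
    replace (g' cc - g' t0) with (k * (cc - t0)) by (unfold k; field; lra).
    apply Rmult_gt_0_compat; lra. }
  assert (hle := hmax (t0 + m)). fold (g (t0+m)) in hle. fold (g t0) in hle.
  assert (Rabs (t0 + m - t0) < r) by (rewrite Rabs_pos_eq; lra).
  specialize (hle H).
  assert (g' cc * (t0 + m - t0) > 0) by (apply Rmult_gt_0_compat; lra).
  lra.
- destruct (MVT_cor2 g g' (t0 - m) t0) as [cc [eq [c1 c2]]]; [lra| |].
  { intros x hx. apply hg. rewrite Rabs_left1; lra. }
  assert (hq := quot (cc - t0)).
  replace (t0 + (cc - t0)) with cc in hq by ring.
  assert (hq' : (g' cc - g' t0) / (cc - t0) > L / 2).
  { apply hq; [lra|]. rewrite Rabs_left1; lra. }
  assert (hneg : g' cc - g' t0 < 0).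
  { set (k := (g' cc - g' t0) / (cc - t0)) in hq'.
    replace (g' cc - g' t0) with (k * (cc - t0)) by (unfold k; field; lra).
    assert (k * (t0 - cc) > 0) by (apply Rmult_gt_0_compat; lra). lra. }
  assert (hle := hmax (t0 - m)). fold (g (t0-m)) in hle. fold (g t0) in hle.
  assert (Rabs (t0 - m - t0) < r) by (rewrite Rabs_left1; lra).
  specialize (hle H).
  assert ((- g' cc) * (t0 - (t0 - m)) > 0) by (apply Rmult_gt_0_compat; lra).
  lra.
Qed.
Definition hb (A B D E a b : R) (q : pt) : R :=
  A + B * snd q + D * ((fst (fst q) - a)^2 + (snd (fst q) - b)^2) - E * (snd q)^2.

Lemma ed_F (v1 v2 : pt -> R) A B D E a b (p : pt) : continuous v1 p -> continuous v2 p ->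
  forall eps, 0 < eps -> exists d, 0 < d /\ forall q,
   Rabs (fst (fst q) - fst (fst p)) < d -> Rabs (snd (fst q) - snd (fst p)) < d ->
   Rabs (snd q - snd p) < d ->
   Rabs ((v2 q - v1 q - hb A B D E a b q) - (v2 p - v1 p - hb A B D E a b p)) < eps.
Proof.
intros c1 c2 eps he.
assert (he5 : 0 < eps / 5) by lra.
destruct (ed_pt v1 p c1 _ he5) as [d1 [h1 k1]].
destruct (ed_pt v2 p c2 _ he5) as [d2 [h2 k2]].
destruct (ed_R (fun t => D * (t - a)^2) (fst (fst p)) ltac:(auto_derive; auto) _ he5) as [d3 [h3 k3]].
destruct (ed_R (fun t => D * (t - b)^2) (snd (fst p)) ltac:(auto_derive; auto) _ he5) as [d4 [h4 k4]].
destruct (ed_R (fun t => B * t - E * t^2) (snd p) ltac:(auto_derive; auto) _ he5) as [d5 [h5 k5]].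
exists (Rmin (Rmin d1 d2) (Rmin (Rmin d3 d4) d5)).
split. { repeat apply Rmin_glb_lt; auto. }
intros q q1 q2 q3.
assert (m1 := Rmin_l (Rmin d1 d2) (Rmin (Rmin d3 d4) d5)).
assert (m2 := Rmin_r (Rmin d1 d2) (Rmin (Rmin d3 d4) d5)).
assert (m11 := Rmin_l d1 d2). assert (m12 := Rmin_r d1 d2).
assert (m21 := Rmin_l (Rmin d3 d4) d5). assert (m22 := Rmin_r (Rmin d3 d4) d5).
assert (m31 := Rmin_l d3 d4). assert (m32 := Rmin_r d3 d4).
assert (e1 := k1 q ltac:(lra) ltac:(lra) ltac:(lra)).
assert (e2 := k2 q ltac:(lra) ltac:(lra) ltac:(lra)).
assert (e3 := k3 (fst (fst q)) ltac:(lra)).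
assert (e4 := k4 (snd (fst q)) ltac:(lra)).
assert (e5 := k5 (snd q) ltac:(lra)).
apply Rabs_def2 in e1. apply Rabs_def2 in e2. apply Rabs_def2 in e3.
apply Rabs_def2 in e4. apply Rabs_def2 in e5.
apply Rabs_def1; unfold hb; lra.
Qed.
Lemma interior_contra (P : list Complex.C) (v1 v2 : pt -> R) (A B D E a b : R)
  (c1 c2 c3 r : R) :
  solves_star P v1 -> solves_star P v2 ->
  (forall p, inX p -> v1 p <= v2 p) ->
  0 < D -> E = 3 * D -> 0 < c3 -> 0 < r -> r <= c3 ->
  (forall q : pt, Rabs (fst (fst q) - c1) < r -> Rabs (snd (fst q) - c2) < r ->
     Rabs (snd q - c3) < r ->
     v2 q - v1 q - hb A B D E a b q <= v2 (c1,c2,c3) - v1 (c1,c2,c3) - hb A B D E a b (c1,c2,c3)) ->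
  False.
Proof.
intros [sm1 eq1] [sm2 eq2] hle hD hE hc3 hr hrc hmax.
assert (inc : inX (c1,c2,c3)) by (unfold inX; simpl; lra).
assert (R0 : Rabs 0 < r) by (rewrite Rabs_R0; lra).
assert (d0 : Derive (Derive (fun t => v2 (t,c2,c3))) c1 - Derive (Derive (fun t => v1 (t,c2,c3))) c1 <= 2 * D).
{ apply (key1D _ _ D (-2*D*a) (A + B*c3 + D*(a^2 + (c2-b)^2) - E*c3^2) c1 r hr).
  - intros t ht. assert (inX (t,c2,c3)) by (unfold inX; simpl; lra). split.
    + exact (proj2 (sm1 nil (t,c2,c3) H) 0%nat ltac:(lia)).
    + exact (proj2 (sm2 nil (t,c2,c3) H) 0%nat ltac:(lia)).
  - exact (proj2 (sm1 (0%nat::nil) (c1,c2,c3) inc) 0%nat ltac:(lia)).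
  - exact (proj2 (sm2 (0%nat::nil) (c1,c2,c3) inc) 0%nat ltac:(lia)).
  - intros t ht. assert (H := hmax (t,c2,c3)). simpl in H.
    replace (c2 - c2) with 0 in H by ring. replace (c3 - c3) with 0 in H by ring.
    specialize (H ht R0 R0). unfold hb in H; simpl in H. nra. }
assert (d1 : Derive (Derive (fun t => v2 (c1,t,c3))) c2 - Derive (Derive (fun t => v1 (c1,t,c3))) c2 <= 2 * D).
{ apply (key1D _ _ D (-2*D*b) (A + B*c3 + D*((c1-a)^2 + b^2) - E*c3^2) c2 r hr).
  - intros t ht. assert (inX (c1,t,c3)) by (unfold inX; simpl; lra). split.
    + exact (proj2 (sm1 nil (c1,t,c3) H) 1%nat ltac:(lia)).
    + exact (proj2 (sm2 nil (c1,t,c3) H) 1%nat ltac:(lia)).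
  - exact (proj2 (sm1 (1%nat::nil) (c1,c2,c3) inc) 1%nat ltac:(lia)).
  - exact (proj2 (sm2 (1%nat::nil) (c1,c2,c3) inc) 1%nat ltac:(lia)).
  - intros t ht. assert (H := hmax (c1,t,c3)). simpl in H.
    replace (c1 - c1) with 0 in H by ring. replace (c3 - c3) with 0 in H by ring.
    specialize (H R0 ht R0). unfold hb in H; simpl in H. nra. }
assert (d2 : Derive (Derive (fun t => v2 (c1,c2,t))) c3 - Derive (Derive (fun t => v1 (c1,c2,t))) c3 <= 2 * (-E)).
{ apply (key1D _ _ (-E) B (A + D*((c1-a)^2 + (c2-b)^2)) c3 r hr).
  - intros t ht. assert (inX (c1,c2,t)).
    { unfold inX; simpl. apply Rabs_def2 in ht. lra. } split.
    + exact (proj2 (sm1 nil (c1,c2,t) H) 2%nat ltac:(lia)).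
    + exact (proj2 (sm2 nil (c1,c2,t) H) 2%nat ltac:(lia)).
  - exact (proj2 (sm1 (2%nat::nil) (c1,c2,c3) inc) 2%nat ltac:(lia)).
  - exact (proj2 (sm2 (2%nat::nil) (c1,c2,c3) inc) 2%nat ltac:(lia)).
  - intros t ht. assert (H := hmax (c1,c2,t)). simpl in H.
    replace (c1 - c1) with 0 in H by ring. replace (c2 - c2) with 0 in H by ring.
    specialize (H R0 R0 ht). unfold hb in H; simpl in H. nra. }
assert (L1 : laplacian v1 (c1,c2,c3) = Derive (Derive (fun t => v1 (t,c2,c3))) c1
   + Derive (Derive (fun t => v1 (c1,t,c3))) c2 + Derive (Derive (fun t => v1 (c1,c2,t))) c3) by reflexivity.
assert (L2 : laplacian v2 (c1,c2,c3) = Derive (Derive (fun t => v2 (t,c2,c3))) c1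
   + Derive (Derive (fun t => v2 (c1,t,c3))) c2 + Derive (Derive (fun t => v2 (c1,c2,t))) c3) by reflexivity.
specialize (eq1 _ inc). specialize (eq2 _ inc).
set (M := Cmod (peval P (fst (fst (c1, c2, c3)), snd (fst (c1, c2, c3)))) ^ 2) in *.
assert (HM : 0 <= M) by (unfold M; apply pow2_ge_0).
assert (Hexp : exp (-2 * v2 (c1,c2,c3)) <= exp (-2 * v1 (c1,c2,c3))).
{ specialize (hle _ inc). destruct (Req_dec (v1 (c1,c2,c3)) (v2 (c1,c2,c3))) as [He|He].
  - rewrite He; lra.
  - left; apply exp_increasing; lra. }
assert (exp (-2 * v2 (c1,c2,c3)) * M <= exp (-2 * v1 (c1,c2,c3)) * M) by (apply Rmult_le_compat_r; auto).
lra.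
Qed.
Lemma rpow_pos x y : 0 < Rpower x y.
Proof. unfold Rpower; apply exp_pos. Qed.

Lemma rpow_inv_ge (c s Y : R) : 0 < c -> 0 < s -> Rpower c (/ s) <= Y -> c <= Rpower Y s.
Proof.
intros hc hs hY.
assert (H := Rle_Rpower_l (Rpower c (/s)) Y s ltac:(lra) (conj (rpow_pos _ _) hY)).
rewrite Rpower_mult, Rinv_l, Rpower_1 in H; lra.
Qed.

Lemma rpow_inv_le (c s y : R) : 0 < c -> 0 < s -> 0 < y -> y <= Rpower c (/ s) -> Rpower y s <= c.
Proof.
intros hc hs hy hY.
assert (H := Rle_Rpower_l y (Rpower c (/s)) s ltac:(lra) (conj hy hY)).
rewrite Rpower_mult, Rinv_l, Rpower_1 in H; lra.
Qed.

Lemma rpow_split (Y e : R) : 0 < Y -> Rpower Y e * Rpower Y (1 - e) = Y.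
Proof. intros h. rewrite <- Rpower_plus. replace (e + (1 - e)) with 1 by ring. now apply Rpower_1. Qed.

Lemma rpow_mono (y Y s : R) : 0 <= s -> 0 < y -> y <= Y -> Rpower y s <= Rpower Y s.
Proof. intros; apply Rle_Rpower_l; lra. Qed.

Theorem mainTheorem7 (P : list Complex.C) (v1 v2 : pt -> R) (K eps : R) :
  nonzero_poly P ->
  solves_star P v1 -> solves_star P v2 ->
  0 < K -> 0 < eps < 1 ->
  (forall p : pt, inX p ->
     0 <= v2 p - v1 p <=
     K * (Rpower (snd p) eps + Rpower (snd p) (1 - eps))) ->
  forall p : pt, inX p -> v1 p = v2 p.
Proof.
intros _ s1 s2 hK heps hw p0 hp0.
destruct (Req_dec (v1 p0) (v2 p0)) as [he|hne]; [exact he|exfalso].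
destruct p0 as [[a b] y0]. unfold inX in hp0; simpl in hp0.
set (del := v2 (a,b,y0) - v1 (a,b,y0)).
assert (hdel : 0 < del) by (assert (H := hw (a,b,y0) hp0); unfold del; lra).
set (g := fun y => K * (Rpower y eps + Rpower y (1 - eps))).
set (A := del / 2). set (B := del / (4 * y0)).
assert (hB : 0 < B) by (unfold B; apply Rdiv_lt_0_compat; lra).
set (c0 := 4 * K / B).
assert (hc0 : 0 < c0) by (unfold c0; apply Rdiv_lt_0_compat; lra).
set (Y := Rmax (Rmax 1 (2 * y0)) (Rmax (Rpower c0 (/ (1 - eps))) (Rpower c0 (/ eps)))).
assert (hY1 : 1 <= Y) by (unfold Y; eapply Rle_trans; [apply Rmax_l|apply Rmax_l]).
assert (hY2 : 2 * y0 <= Y) by (unfold Y; eapply Rle_trans; [apply Rmax_r|apply Rmax_l]).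
assert (hY3 : Rpower c0 (/ (1 - eps)) <= Y) by (unfold Y; eapply Rle_trans; [apply Rmax_l|apply Rmax_r]).
assert (hY4 : Rpower c0 (/ eps) <= Y) by (unfold Y; eapply Rle_trans; [apply Rmax_r|apply Rmax_r]).
assert (hYa : c0 <= Rpower Y (1 - eps)) by (apply rpow_inv_ge; auto; lra).
assert (hYb : c0 <= Rpower Y eps) by (apply rpow_inv_ge; auto; lra).
assert (hsplit := rpow_split Y eps ltac:(lra)).
assert (hgY : g Y <= B * Y / 2).
{ unfold g. assert (0 < Rpower Y eps) by apply rpow_pos.
  assert (0 < Rpower Y (1 - eps)) by apply rpow_pos.
  assert (K = c0 * B / 4) by (unfold c0; field; lra).
  set (pp := Rpower Y eps) in *. set (qq := Rpower Y (1 - eps)) in *.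
  assert (B / 4 * pp * c0 <= B / 4 * pp * qq) by (apply Rmult_le_compat_l; nra).
  assert (B / 4 * qq * c0 <= B / 4 * qq * pp) by (apply Rmult_le_compat_l; nra).
  rewrite <- hsplit. rewrite H1. lra. }
set (E := B / (2 * Y)).
assert (hE : 0 < E) by (unfold E; apply Rdiv_lt_0_compat; lra).
assert (hEY : E * Y ^ 2 = B * Y / 2) by (unfold E; field; lra).
set (D := E / 3).
assert (hD : 0 < D) by (unfold D; lra).
set (t0 := del / (16 * K)).
assert (ht0 : 0 < t0) by (unfold t0; apply Rdiv_lt_0_compat; lra).
set (eta := Rmin (Rmin 1 (y0 / 2)) (Rmin (Rmin (Rpower t0 (/ eps)) (Rpower t0 (/ (1 - eps)))) (del / (8 * E)))).
assert (heta0 : 0 < eta).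
{ unfold eta. repeat apply Rmin_glb_lt; try apply rpow_pos; try lra.
  apply Rdiv_lt_0_compat; lra. }
assert (heta1 : eta <= 1) by (unfold eta; eapply Rle_trans; [apply Rmin_l|apply Rmin_l]).
assert (heta2 : eta <= y0 / 2) by (unfold eta; eapply Rle_trans; [apply Rmin_l|apply Rmin_r]).
assert (heta3 : eta <= Rpower t0 (/ eps)).
{ unfold eta. eapply Rle_trans; [apply Rmin_r|]. eapply Rle_trans; [apply Rmin_l|apply Rmin_l]. }
assert (heta4 : eta <= Rpower t0 (/ (1 - eps))).
{ unfold eta. eapply Rle_trans; [apply Rmin_r|]. eapply Rle_trans; [apply Rmin_l|apply Rmin_r]. }
assert (heta5 : eta <= del / (8 * E)) by (unfold eta; eapply Rle_trans; [apply Rmin_r|apply Rmin_r]).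
assert (hge : g eta <= del / 8).
{ unfold g. assert (Rpower eta eps <= t0) by (apply rpow_inv_le; lra).
  assert (Rpower eta (1 - eps) <= t0) by (apply rpow_inv_le; lra).
  assert (K * t0 = del / 16) by (unfold t0; field; lra). nra. }
assert (hEe : E * eta ^ 2 <= del / 8).
{ assert (E * eta <= del / 8).
  { replace (del / 8) with (E * (del / (8 * E))) by (field; lra). apply Rmult_le_compat_l; lra. }
  nra. }
set (Rr := 1 + (g Y + E * Y ^ 2) / D).
assert (hgY0 : 0 <= g Y) by (unfold g; assert (H1 := rpow_pos Y eps); assert (H2 := rpow_pos Y (1-eps)); nra).
assert (hRr1 : 1 <= Rr) by (unfold Rr; assert (0 <= (g Y + E * Y ^ 2) / D) by (apply Rdiv_le_0_compat; nra); lra).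
assert (hRr2 : D * Rr ^ 2 >= g Y + E * Y ^ 2 + D).
{ assert (D * ((g Y + E * Y ^ 2) / D) = g Y + E * Y ^ 2) by (field; lra).
  assert (Rr <= Rr ^ 2) by nra. unfold Rr in *. nra. }
set (F := fun q : pt => v2 q - v1 q - hb A B D E a b q).
assert (hwg : forall q : pt, eta <= snd q <= Y -> v2 q - v1 q <= g Y /\ 0 <= v2 q - v1 q).
{ intros q hq. assert (inX q) by (unfold inX; lra).
  destruct (hw q H) as [h1 h2]. split; [|lra].
  eapply Rle_trans; [exact h2|]. unfold g.
  assert (Rpower (snd q) eps <= Rpower Y eps) by (apply rpow_mono; lra).
  assert (Rpower (snd q) (1-eps) <= Rpower Y (1-eps)) by (apply rpow_mono; lra).
  nra. }
destruct (EVTm.EVT3 F (a - Rr) (a + Rr) (b - Rr) (b + Rr) eta Y ltac:(lra) ltac:(lra) ltac:(lra))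
  as [[[c1 c2] c3] [hcin hcmax]].
{ intros p hp e he.
  assert (inX p) by (unfold EVTm.inbox, inX in *; lra).
  apply (ed_F v1 v2 A B D E a b p (proj1 (proj1 s1 nil p H)) (proj1 (proj1 s2 nil p H)) e he). }
unfold EVTm.inbox in hcin; simpl in hcin.
assert (Fp0 : F (a,b,y0) > 0).
{ unfold F, hb; cbn [fst snd]. fold del. replace (a - a) with 0 by ring. replace (b - b) with 0 by ring.
  assert (B * y0 = del / 4) by (unfold B; field; lra).
  assert (0 <= E * y0 ^ 2) by nra. unfold del in *. unfold A. lra. }
assert (Fc : F (c1,c2,c3) > 0).
{ assert (F (a,b,y0) <= F (c1,c2,c3)); [|lra].
  apply hcmax. unfold EVTm.inbox; simpl; lra. }
destruct (hwg (c1,c2,c3) ltac:(simpl; lra)) as [wc1 wc2].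
assert (hq3 : 0 <= c3) by lra.
unfold F, hb in Fc; cbn [fst snd] in Fc.
assert (hsq1 : 0 <= D * (c1 - a) ^ 2) by (apply Rmult_le_pos; [lra|apply pow2_ge_0]).
assert (hsq2 : 0 <= D * (c2 - b) ^ 2) by (apply Rmult_le_pos; [lra|apply pow2_ge_0]).
assert (hsq : 0 <= D * ((c1 - a) ^ 2 + (c2 - b) ^ 2)) by (rewrite Rmult_plus_distr_l; lra).
assert (i1 : eta < c3).
{ destruct (Req_dec c3 eta) as [He|He]; [|lra]. subst c3.
  assert (v2 (c1,c2,eta) - v1 (c1,c2,eta) <= g eta).
  { destruct (hw (c1,c2,eta) ltac:(unfold inX; simpl; lra)) as [_ h]. exact h. }
  assert (0 <= B * eta) by nra. unfold A in Fc. nra. }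
assert (i2 : c3 < Y).
{ destruct (Req_dec c3 Y) as [He|He]; [|lra]. subst c3.
  unfold A in Fc. nra. }
assert (hc3Y : E * c3 ^ 2 <= E * Y ^ 2) by (apply Rmult_le_compat_l; nra).
assert (i3 : forall x, Rabs x = Rr -> D * x ^ 2 = D * Rr ^ 2).
{ intros x hx. rewrite <- hx, pow2_abs. reflexivity. }
assert (i4 : Rabs (c1 - a) < Rr).
{ destruct (Req_dec (Rabs (c1 - a)) Rr) as [He|He].
  - exfalso. assert (H := i3 _ He). unfold A in Fc. nra.
  - assert (Rabs (c1 - a) <= Rr) by (apply Rabs_le; lra). lra. }
assert (i5 : Rabs (c2 - b) < Rr).
{ destruct (Req_dec (Rabs (c2 - b)) Rr) as [He|He].
  - exfalso. assert (H := i3 _ He). unfold A in Fc. nra.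
  - assert (Rabs (c2 - b) <= Rr) by (apply Rabs_le; lra). lra. }
apply Rabs_def2 in i4. apply Rabs_def2 in i5.
set (r := Rmin (Rmin (Rmin (c1 - (a - Rr)) (a + Rr - c1)) (Rmin (c2 - (b - Rr)) (b + Rr - c2)))
               (Rmin (c3 - eta) (Y - c3))).
assert (hr : 0 < r) by (unfold r; repeat apply Rmin_glb_lt; lra).
assert (r1 : r <= c1 - (a - Rr)) by (unfold r; repeat (eapply Rle_trans; [apply Rmin_l|]); lra).
assert (r2 : r <= a + Rr - c1).
{ unfold r; eapply Rle_trans; [apply Rmin_l|]. eapply Rle_trans; [apply Rmin_l|]. apply Rmin_r. }
assert (r3 : r <= c2 - (b - Rr)).
{ unfold r; eapply Rle_trans; [apply Rmin_l|]. eapply Rle_trans; [apply Rmin_r|]. apply Rmin_l. }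
assert (r4 : r <= b + Rr - c2).
{ unfold r; eapply Rle_trans; [apply Rmin_l|]. eapply Rle_trans; [apply Rmin_r|]. apply Rmin_r. }
assert (r5 : r <= c3 - eta).
{ unfold r; eapply Rle_trans; [apply Rmin_r|]. apply Rmin_l. }
assert (r6 : r <= Y - c3).
{ unfold r; eapply Rle_trans; [apply Rmin_r|]. apply Rmin_r. }
apply (interior_contra P v1 v2 A B D E a b c1 c2 c3 r s1 s2).
- intros q hq. destruct (hw q hq); lra.
- exact hD.
- unfold D; lra.
- lra.
- exact hr.
- lra.
- intros q q1 q2 q3. apply Rabs_def2 in q1. apply Rabs_def2 in q2. apply Rabs_def2 in q3.
  apply (hcmax q). unfold EVTm.inbox; lra.
Qed.
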